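(* Let sampling data $\{(\mathrm{i}\omega_i, H_i)\}_{i=1}^{N}$ be given, with $\omega_i \in \mathbb{R}$ and $H_i \in \mathbb{C}^{n_o \times n_i}$, closed under conjugation (if $\mathrm{i}\omega_k$ is a sampling frequency then so is $-\mathrm{i}\omega_k$, and the datum at $-\mathrm{i}\omega_k$ is $\overline{H_k}$), and weights $\rho_i > 0$ that are equal for complex conjugate pairs of sampling frequencies. For real matrices $\hat{E}, \hat{A} \in \mathbb{R}^{r\times r}$, $\hat{B} \in \mathbb{R}^{r \times n_i}$, $\hat{C} \in \mathbb{R}^{n_o \times r}$ let $\hat{H}(s) = \hat{C}(s\hat{E} - \hat{A})^{-1}\hat{B}$ and $\mathcal{J}(\hat{H}) = \sum_{i=1}^{N} \rho_i \|H_i - \hat{H}(\mathrm{i}\omega_i)\|_F^2$. Let $\hat{H}$ have the pole-residue form $\hat{H}(s) = \sum_{j=1}^{r} \frac{c_j b_j^{*}}{s - \lambda_j}$ with pairwise distinct poles $\lambda_j$ (where $c_j = \hat{C}\hat{T}e_j$, $b_j = \hat{B}^{T}\hat{S}e_j$ for invertible $\hat{T},\hat{S} \in \mathbb{C}^{r\times r}$ with $\hat{S}^*\hat{E}\hat{T} = I$ and $\hat{S}^*\hat{A}\hat{T} = \operatorname{diag}(\lambda_1,\dots,\lambda_r)$), and let $\hat{H}$ be a local minimum of $\mathcal{J}$. Then for $k = 1, \dots, r$: \begin{align*} \sum_{i=1}^{N} \rho_i \frac{H_i b_k}{-\mathrm{i}\omega_i - \overline{\lambda_k}} &= \sum_{i=1}^{N}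 \rho_i \frac{\hat{H}(\mathrm{i}\omega_i) b_k}{-\mathrm{i}\omega_i - \overline{\lambda_k}},\\ \sum_{i=1}^{N} \rho_i \frac{c_k^{*} H_i}{-\mathrm{i}\omega_i - \overline{\lambda_k}} &= \sum_{i=1}^{N} \rho_i \frac{c_k^{*} \hat{H}(\mathrm{i}\omega_i)}{-\mathrm{i}\omega_i - \overline{\lambda_k}},\\ \sum_{i=1}^{N} \rho_i \frac{c_k^{*} H_i b_k}{(-\mathrm{i}\omega_i - \overline{\lambda_k})^2} &= \sum_{i=1}^{N} \rho_i \frac{c_k^{*} \hat{H}(\mathrm{i}\omega_i) b_k}{(-\mathrm{i}\omega_i - \overline{\lambda_k})^2}. \end{align*}
   Context: $\|\cdot\|_F$ is the Frobenius norm, $(\cdot)^*$ the conjugate transpose, $e_j$ the $j$th standard unit vector. The local minimum is with respect to the real matrices $\hat{E},\hat{A},\hat{B},\hat{C}$ (with $r$ fixed), among those for which $\hat{E}$ is invertible and $\mathrm{i}\omega_i\hat{E} - \hat{A}$ is invertible for all sampling frequencies. *)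

(* Defs.v *)
From HB Require Import structures.
From mathcomp Require Import all_boot all_order all_algebra.
From mathcomp Require Import complex.
Set Implicit Arguments. Unset Strict Implicit. Unset Printing Implicit Defensive.
Import Order.TTheory GRing.Theory Num.Theory.
Local Open Scope ring_scope.
Local Open Scope complex_scope.

Section Defs.
Variable R : rcfType.
Local Notation C := (R[i]).

Definition cmx m n (M : 'M[R]_(m, n)) : 'M[C]_(m, n) := map_mx (fun x => x%:C) M.

Definition cconjmx m n (M : 'M[C]_(m, n)) : 'M[C]_(m, n) := map_mx (@conjc R) M.
Definition ctrmx m n (M : 'M[C]_(m, n)) : 'M[C]_(n, m) := (cconjmx M)^T.

Definition sqmod (z : C) : R := (@complex.Re R z) ^+ 2 + (@complex.Im R z) ^+ 2.

Definition frob2 m n (M : 'M[C]_(m, n)) : R := \sum_(a < m) \sum_(b < n) sqmod (M a b).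

Definition tf r ni no (E A : 'M[R]_r) (B : 'M[R]_(r, ni)) (Cm : 'M[R]_(no, r))
  (s : C) : 'M[C]_(no, ni) :=
  cmx Cm *m invmx (s *: cmx E - cmx A) *m cmx B.

Definition iw (w : R) : C := Complex 0 w.

Definition Jcost N ni no (om : 'I_N -> R) (H : 'I_N -> 'M[C]_(no, ni))
  (rho : 'I_N -> R) r (E A : 'M[R]_r) (B : 'M[R]_(r, ni)) (Cm : 'M[R]_(no, r)) : R :=
  \sum_(i < N) rho i * frob2 (H i - tf E A B Cm (iw (om i))).

Definition admissible N (om : 'I_N -> R) r (E A : 'M[R]_r) : Prop :=
  cmx E \in unitmx /\ forall i, (iw (om i) *: cmx E - cmx A) \in unitmx.

(* matrices within distance eps (entrywise max-norm; all norms on a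
   finite-dimensional real space are equivalent) *)
Definition near_mx m n (eps : R) (M M' : 'M[R]_(m, n)) : Prop :=
  forall a b, `|M' a b - M a b| < eps.

Definition local_min_J N ni no (om : 'I_N -> R) (H : 'I_N -> 'M[C]_(no, ni))
  (rho : 'I_N -> R) r (E A : 'M[R]_r) (B : 'M[R]_(r, ni)) (Cm : 'M[R]_(no, r)) : Prop :=
  admissible om E A /\
  exists2 eps : R, 0 < eps &
    forall (E' A' : 'M[R]_r) (B' : 'M[R]_(r, ni)) (C' : 'M[R]_(no, r)),
      near_mx eps E E' -> near_mx eps A A' -> near_mx eps B B' -> near_mx eps Cm C' ->
      admissible om E' A' ->
      Jcost om H rho E A B Cm <= Jcost om H rho E' A' B' C'.
End Defs.

(* Main.v *)
Require Import Defs.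
From HB Require Import structures.
From mathcomp Require Import all_boot all_order all_algebra.
From mathcomp Require Import complex.
From mathcomp Require Import ring lra.
Set Implicit Arguments. Unset Strict Implicit. Unset Printing Implicit Defensive.
Import Order.TTheory GRing.Theory Num.Theory.
Local Open Scope ring_scope.
Local Open Scope complex_scope.

Section Analytic.
Variable R : rcfType.
Definition qb (f : R -> R) (g : R) : Prop :=
  exists2 de : R, 0 < de & exists K : R, forall t, `|t| < de ->
     `|f t - f 0 - t * g| <= K * t ^+ 2.

Lemma qb_add f1 f2 g1 g2 : qb f1 g1 -> qb f2 g2 -> qb (fun t => f1 t + f2 t) (g1 + g2).
Proof.
move=> [d1 d1p [K1 h1]] [d2 d2p [K2 h2]].
exists (Num.min d1 d2); first by rewrite lt_min d1p d2p.
exists (K1 + K2) => t; rewrite lt_min => /andP[t1 t2].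
have := h1 t t1; have := h2 t t2 => e2 e1.
have -> : f1 t + f2 t - (f1 0 + f2 0) - t * (g1 + g2)
   = (f1 t - f1 0 - t * g1) + (f2 t - f2 0 - t * g2) by ring.
apply: le_trans (ler_normD _ _) _; rewrite mulrDl; exact: lerD.
Qed.

Lemma qb_scale c f g : qb f g -> qb (fun t => c * f t) (c * g).
Proof.
move=> [d dp [K h]]; exists d => //; exists (`|c| * K) => t /h e.
have -> : c * f t - c * f 0 - t * (c * g) = c * (f t - f 0 - t * g) by ring.
rewrite normrM -mulrA; exact: ler_wpM2l.
Qed.

Lemma qb_ext f1 f2 g1 g2 : (forall t, f1 t = f2 t) -> g1 = g2 -> qb f1 g1 -> qb f2 g2.
Proof. by move=> ef <- [d dp [K h]]; exists d => //; exists K => t; rewrite -!ef; exact: h. Qed.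

Lemma qb_sum (I : Type) (s : seq I) (F : I -> R -> R) (G : I -> R) :
  (forall i, qb (F i) (G i)) ->
  qb (fun t => \sum_(i <- s) F i t) (\sum_(i <- s) G i).
Proof.
move=> hF; elim: s => [|x s IH].
  exists 1 => //; exists 0 => t _; by rewrite !big_nil !subrr mulr0 subrr normr0 mul0r.
have := qb_add (hF x) IH => h.
by apply: qb_ext h => [t|]; rewrite big_cons.
Qed.

Lemma qb_min f g : qb f g ->
  (exists2 eps : R, 0 < eps & forall t, `|t| < eps -> f 0 <= f t) -> g = 0.
Proof.
move=> [d dp [K h]] [eps ep hm].
apply/eqP; apply/negPn/negP => gn0.
pose K' := `|K| + 1.
have K'p : 0 < K' by rewrite /K'; have := normr_ge0 K; lra.
have gp : 0 < `|g| by rewrite normr_gt0.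
pose m := Num.min (Num.min (d / 2) (eps / 2)) (`|g| / (2 * K')).
have mp : 0 < m by rewrite /m !lt_min !divr_gt0 // mulr_gt0.
have md : m <= d / 2 by rewrite /m !ge_min lexx.
have me : m <= eps / 2 by rewrite /m !ge_min lexx orbT.
have mg : m <= `|g| / (2 * K') by rewrite /m !ge_min lexx orbT.
pose t := - (Num.sg g) * m.
have nt : `|t| = m by rewrite /t normrM normrN normr_sg gn0 mul1r gtr0_norm.
have tg : t * g = - (m * `|g|) by rewrite /t normrEsg; ring.
have t2 : t ^+ 2 = m ^+ 2 by rewrite -real_normK ?num_real // nt.
have /h e : `|t| < d by rewrite nt; lra.
have /hm e2 : `|t| < eps by rewrite nt; lra.
have e3 : f t - f 0 - t * g <= K' * t ^+ 2.
  apply: le_trans (ler_norm _) _; apply: le_trans e _.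
  rewrite t2; apply: ler_wpM2r; first exact: sqr_ge0.
  rewrite /K'; have := ler_norm K; lra.
rewrite tg t2 in e3.
have mg2 : m * (2 * K') <= `|g| by rewrite -ler_pdivlMr ?mulr_gt0.
have : K' * m ^+ 2 <= m * `|g| / 2 by nra.
have : 0 < m * `|g| by rewrite mulr_gt0.
lra.
Qed.
End Analytic.

Section Sq.
Variable R : rcfType.
Implicit Types x y g : R[i].

Lemma sqmodM x y : sqmod (x * y) = sqmod x * sqmod y.
Proof. case: x => a b; case: y => c d; rewrite /sqmod /=; ring. Qed.
Lemma sqmod_ge0 x : 0 <= sqmod x.
Proof. case: x => a b; rewrite /sqmod /=; nra. Qed.
Lemma sqmod_sub g x : sqmod (g - x) = sqmod g - 2 * complex.Re (g^* * x) + sqmod x.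
Proof. case: g => a b; case: x => c d; rewrite /sqmod /=; ring. Qed.
Lemma Re_bound g y : `|complex.Re (g^* * y)| <= (sqmod g + sqmod y) / 2.
Proof. case: g => a b; case: y => c d; rewrite /sqmod /= ler_norml.
have := sqr_ge0 (a - c); have := sqr_ge0 (b - d); have := sqr_ge0 (a + c); have := sqr_ge0 (b + d).
move=> h1 h2 h3 h4; apply/andP; split; nra. Qed.
Lemma sqmod_real (t : R) : sqmod t%:C = t ^+ 2.
Proof. rewrite /sqmod /=; ring. Qed.
Lemma Re_realM (t : R) x : complex.Re (t%:C * x) = t * complex.Re x.
Proof. case: x => a b /=; ring. Qed.
Lemma ReD x y : complex.Re (x + y) = complex.Re x + complex.Re y.
Proof. by case: x => a b; case: y. Qed.
Lemma sqmod1 : sqmod (1 : R[i]) = 1.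
Proof. rewrite /sqmod /=; ring. Qed.
Lemma sqmod_1sub (t : R) x : `|t * complex.Re x| <= 1/2 -> 1/4 <= sqmod (1 - t%:C * x).
Proof.
case: x => a b; rewrite /sqmod /= ler_norml => /andP[h1 h2].
nra.
Qed.
Lemma qb_atom g d b :
  qb (fun t => sqmod (g - t%:C * d / (1 - t%:C * b))) (-2 * complex.Re (g^* * d)).
Proof.
pose b1 := complex.Re b.
have b1p : 0 < `|b1| + 1 by have := normr_ge0 b1; lra.
exists (1 / (2 * (`|b1| + 1))); first by rewrite divr_gt0 // mulr_gt0.
exists (sqmod g + 4 * sqmod (d * b) + 4 * sqmod d) => t ht.
have htb : `|t * b1| <= 1/2.
  rewrite normrM; have := normr_ge0 t; have := normr_ge0 b1 => h0 h1.
  move: ht; rewrite ltr_pdivlMr ?mulr_gt0 // => ht; nra.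
have [u Eu] : {u : R[i] | u = 1 - t%:C * b} by exists (1 - t%:C * b).
have su := sqmod_1sub htb; rewrite -Eu in su.
have u0 : u != 0 by apply/eqP => u0; move: su; rewrite u0 /sqmod /=; lra.
have [w Ew] : {w : R[i] | w = u^-1} by exists u^-1.
have uw : u * w = 1 by rewrite Ew mulfV.
have sw : sqmod w <= 4.
  have := sqmodM u w; rewrite uw sqmod1 => e; have := sqmod_ge0 w; nra.
have ex : t%:C * d / u = t%:C * d + (t ^+ 2)%:C * (d * b * w).
  apply/eqP; rewrite -subr_eq0; apply/eqP.
  have idt : forall tc d b w : R[i], tc*d*w - (tc*d + tc^+2*(d*b*w)) = tc*d*(w*(1 - tc*b) - 1).
    by move=> *; ring.
  rewrite rmorphXn /= -Ew idt -Eu [w * u]mulrC.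
  by rewrite uw subrr mulr0.

have f0 : sqmod (g - 0%:C * d / (1 - 0%:C * b)) = sqmod g.
  by rewrite (rmorph0 (real_complex R)) !mul0r subr0.
rewrite f0 -Eu -Ew.
have eRe : complex.Re (g^* * (t%:C * d * w)) = t * complex.Re (g^* * d) + t ^+ 2 * complex.Re (g^* * (d * b * w)).
  have -> : t%:C * d * w = t%:C * d / u by rewrite Ew.
  by rewrite ex mulrDr ReD [g^* * (t%:C * _)]mulrCA [g^* * ((t^+2)%:C * _)]mulrCA !Re_realM.
rewrite sqmod_sub eRe !sqmodM sqmod_real.
have hR := Re_bound g (d * b * w); rewrite !sqmodM in hR.
move: hR (sqmod_ge0 g) (sqmod_ge0 b) (sqmod_ge0 d) (sqmod_ge0 w) sw.
move: (complex.Re (g^* * (d * b * w))) (complex.Re (g^* * d)) (sqmod g) (sqmod b) (sqmod d) (sqmod w).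
move=> R2 R1 sg sdb sd sww hR hg hdb hd hw sw'.
have -> : sg - 2 * (t * R1 + t ^+ 2 * R2) + t ^+ 2 * sd * sww - sg - t * (-2 * R1)
   = t ^+ 2 * (sd * sww - 2 * R2) by ring.
rewrite normrM ger0_norm ?sqr_ge0 // mulrC; apply: ler_wpM2r; first exact: sqr_ge0.
have h1 : sd * sdb * sww <= sd * sdb * 4 by apply: ler_wpM2l; rewrite ?mulr_ge0.
have h2 : sd * sww <= sd * 4 by apply: ler_wpM2l.
have h3 : 0 <= sd * sww by apply: mulr_ge0.
move: hR; rewrite !ler_norml => /andP[r1 r2]; apply/andP; split; lra.
Qed.
End Sq.

Section MatC.
Variable R : rcfType.
Local Notation C := (R[i]).

Lemma ctrmx_mul m n p (X : 'M[C]_(m, n)) (Y : 'M[C]_(n, p)) :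
  ctrmx (X *m Y) = ctrmx Y *m ctrmx X.
Proof. by rewrite /ctrmx /cconjmx map_mxM trmx_mul. Qed.

Lemma ctrmxZ m n (a : C) (X : 'M[C]_(m, n)) : ctrmx (a *: X) = conjc a *: ctrmx X.
Proof. by apply/matrixP => i j; rewrite /ctrmx /cconjmx !mxE rmorphM. Qed.

Lemma ctrmxK m n (X : 'M[C]_(m, n)) : ctrmx (ctrmx X) = X.
Proof. by apply/matrixP => i j; rewrite /ctrmx /cconjmx !mxE conjcK. Qed.

Lemma ctrmx_sum m n (I : finType) (F : I -> 'M[C]_(m, n)) :
  ctrmx (\sum_i F i) = \sum_i ctrmx (F i).
Proof. by rewrite /ctrmx /cconjmx map_mx_sum raddf_sum. Qed.

Lemma ctrmx_cmx m n (X : 'M[R]_(m, n)) : ctrmx (cmx X) = cmx X^T.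
Proof. by apply/matrixP => i j; rewrite /ctrmx /cconjmx /cmx !mxE conjc_real. Qed.

Lemma cconj_cmx m n (X : 'M[R]_(m, n)) : cconjmx (cmx X) = cmx X.
Proof. by apply/matrixP => i j; rewrite /cconjmx /cmx !mxE conjc_real. Qed.

Lemma cconjmxM m n p (X : 'M[C]_(m, n)) (Y : 'M[C]_(n, p)) :
  cconjmx (X *m Y) = cconjmx X *m cconjmx Y.
Proof. by rewrite /cconjmx map_mxM. Qed.

Lemma cconjmxZ m n (a : C) (X : 'M[C]_(m, n)) : cconjmx (a *: X) = conjc a *: cconjmx X.
Proof. by rewrite /cconjmx map_mxZ. Qed.

Lemma cconjmxB m n (X Y : 'M[C]_(m, n)) : cconjmx (X - Y) = cconjmx X - cconjmx Y.
Proof. by rewrite /cconjmx map_mxB. Qed.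

Lemma cconjmx_inv n (X : 'M[C]_n) : cconjmx (invmx X) = invmx (cconjmx X).
Proof. by rewrite /cconjmx map_invmx. Qed.

Lemma cconj_ctrmx m n (X : 'M[C]_(m, n)) : cconjmx (ctrmx X) = ctrmx (cconjmx X).
Proof. by apply/matrixP => i j; rewrite /ctrmx /cconjmx !mxE. Qed.

Lemma cconjmx_sum m n (I : finType) (F : I -> 'M[C]_(m, n)) :
  cconjmx (\sum_i F i) = \sum_i cconjmx (F i).
Proof. by rewrite /cconjmx map_mx_sum. Qed.

Lemma cconjmx1 n : cconjmx (1%:M : 'M[C]_n) = 1%:M.
Proof. by apply/matrixP => i j; rewrite /cconjmx !mxE rmorphMn rmorph1. Qed.

Lemma conj_iw (w : R) : conjc (iw w) = iw (- w).
Proof. by []. Qed.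

Lemma iwN (w : R) : iw (- w) = - iw w.
Proof. by rewrite /iw; apply/eqP; rewrite eq_complex /= oppr0 !eqxx. Qed.


Lemma Re_sum (I : Type) (s : seq I) (F : I -> C) :
  complex.Re (\sum_(i <- s) F i) = \sum_(i <- s) complex.Re (F i).
Proof. by apply: (big_morph _ (@ReD R)). Qed.

Lemma delta_diag n (d : 'rV[C]_n) k :
  delta_mx 0 k *m diag_mx d = d 0 k *: (delta_mx 0 k : 'rV[C]_n).
Proof.
apply/matrixP => i j; rewrite mul_mx_diag !mxE.
case: (eqVneq j k) => [->|ne]; first by rewrite mulrC.
by rewrite andbF mul0r mulr0.
Qed.

Lemma diag_delta n (d : 'rV[C]_n) k :
  diag_mx d *m delta_mx k 0 = d 0 k *: (delta_mx k 0 : 'cV[C]_n).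
Proof.
apply/matrixP => i j; rewrite mul_diag_mx !mxE.
by case: (eqVneq i k) => [->|ne]; rewrite /= ?mulr0.
Qed.

Lemma cmx_delta m n (p : 'I_m) (q : 'I_n) : cmx (delta_mx p q) = delta_mx p q :> 'M[C]_(m, n).
Proof. by apply/matrixP => i j; rewrite /cmx !mxE rmorph_nat. Qed.

Lemma ip_delta no ni m m' (Gm : 'M[C]_(no, ni)) (P : 'M[C]_(no, m)) (Q : 'M[C]_(m', ni))
  (p : 'I_m) (q : 'I_m') :
  \sum_a \sum_b conjc (Gm a b) * (P *m cmx (delta_mx p q) *m Q) a b = (Q *m ctrmx Gm *m P) q p.
Proof.
rewrite cmx_delta -(mul_delta_mx (0 : 'I_1)) mulmxA -colE -mulmxA -rowE.
rewrite mxE; apply: eq_bigr => a _; rewrite mxE mulr_suml; apply: eq_bigr => b _.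
rewrite !mxE big_ord1 /col /row !mxE.
ring.
Qed.

Lemma dRd n (X : 'M[C]_n) p q : delta_mx p q *m X *m delta_mx p q = X q p *: delta_mx p q.
Proof.
have mid : delta_mx 0 q *m X *m delta_mx p 0 = (X q p)%:M :> 'M[C]_1.
  rewrite -rowE -colE [LHS]mx11_scalar; congr (_%:M).
  by rewrite /col /row !mxE.
rewrite -(mul_delta_mx (0 : 'I_1) p q).
have -> : delta_mx p (0 : 'I_1) *m delta_mx (0 : 'I_1) q *m X *m (delta_mx p (0 : 'I_1) *m delta_mx (0 : 'I_1) q)
   = delta_mx p (0 : 'I_1) *m (delta_mx (0 : 'I_1) q *m X *m delta_mx p (0 : 'I_1)) *m delta_mx (0 : 'I_1) q by rewrite !mulmxA.
by rewrite mid mul_mx_scalar -scalemxAl mul_delta_mx.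
Qed.

Lemma inv_from_right n (X Y : 'M[C]_n) : X *m Y = 1%:M -> invmx X = Y.
Proof.
move=> h; have [uX _] := mulmx1_unit h.
by rewrite -[invmx X]mulmx1 -h mulmxA (mulVmx uX) mul1mx.
Qed.

Lemma sherman n (M : 'M[C]_n) p q (t : C) :
  M \in unitmx -> 1 - t * invmx M q p != 0 ->
  (M - t *: delta_mx p q) *m (invmx M + (t / (1 - t * invmx M q p)) *: (invmx M *m delta_mx p q *m invmx M)) = 1%:M.
Proof.
move=> uM nz; set Rm := invmx M; set b := Rm q p; set c := t / (1 - t * b).
have dR : delta_mx p q *m Rm *m delta_mx p q = b *: delta_mx p q by rewrite dRd.
rewrite mulmxDr !mulmxBl (mulmxV uM) -!scalemxAl -!scalemxAr !mulmxA (mulmxV uM) mul1mx.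
rewrite dR -scalemxAl !scalerA -scalerBl.
have -> : c - t * (c * b) = t.
  have -> : c - t * (c * b) = c * (1 - t * b) by ring.
  by rewrite /c divfK.
by rewrite subrK.
Qed.

End MatC.

Section Main.
Variables (R : rcfType) (N ni no r : nat) (om : 'I_N -> R) (H : 'I_N -> 'M[R[i]]_(no, ni))
  (rho : 'I_N -> R) (E A : 'M[R]_r) (B : 'M[R]_(r, ni)) (Cm : 'M[R]_(no, r)).
Local Notation C := (R[i]).

Definition Hh i := tf E A B Cm (iw (om i)).
Definition G i := H i - Hh i.

Lemma grad_generic (hmin : local_min_J om H rho E A B Cm)
  (A' : R -> 'M[R]_r) (B' : R -> 'M[R]_(r, ni)) (C' : R -> 'M[R]_(no, r))
  (D : 'I_N -> 'M[C]_(no, ni)) (beta : 'I_N -> C) (d0 : R) :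
  0 < d0 ->
  (forall t eps, `|t| < eps -> [/\ near_mx eps A (A' t), near_mx eps B (B' t) & near_mx eps Cm (C' t)]) ->
  (forall t, `|t| < d0 -> admissible om E (A' t) /\ forall i,
      tf E (A' t) (B' t) (C' t) (iw (om i)) = Hh i + (t%:C / (1 - t%:C * beta i)) *: D i) ->
  \sum_i rho i * (\sum_a \sum_b complex.Re (conjc (G i a b) * D i a b)) = 0.
Proof.
move=> d0p hnear htf.
pose f t := \sum_i rho i * (\sum_a \sum_b sqmod (G i a b - t%:C * D i a b / (1 - t%:C * beta i))).
have qf : qb f (\sum_i rho i * (\sum_a \sum_b (-2 * complex.Re (conjc (G i a b) * D i a b)))).
  apply: qb_sum => i; apply: qb_scale; apply: qb_sum => a; apply: qb_sum => b; exact: qb_atom.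
have [eps ep hloc] := hmin.2.
have g0 := qb_min qf.
have nE : near_mx eps E E by move=> a b; rewrite subrr normr0.
have : \sum_i rho i * (\sum_a \sum_b (-2 * complex.Re (conjc (G i a b) * D i a b))) = 0.
  apply: g0; exists (Num.min eps d0); first by rewrite lt_min ep d0p.
  move=> t; rewrite lt_min => /andP[te td].
  have [hadm htf'] := htf t td.
  have [n1 n2 n3] := hnear t eps te.
  have hJ := hloc _ _ _ _ nE n1 n2 n3 hadm.
  have -> : f 0 = Jcost om H rho E A B Cm.
    rewrite /f /Jcost; apply: eq_bigr => i _; congr (_ * _); rewrite /frob2.
    apply: eq_bigr => a _; apply: eq_bigr => b _.
    by rewrite (rmorph0 (real_complex R)) !mul0r subr0.
  have -> : f t = Jcost om H rho E (A' t) (B' t) (C' t).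
    rewrite /f /Jcost; apply: eq_bigr => i _; congr (_ * _); rewrite /frob2.
    apply: eq_bigr => a _; apply: eq_bigr => b _.
    rewrite htf' /G !mxE opprD addrA; congr (sqmod (_ - _)).
    by rewrite mulrAC.
  exact: hJ.
have -> : \sum_i rho i * (\sum_a \sum_b (-2 * complex.Re (conjc (G i a b) * D i a b)))
   = -2 * \sum_i rho i * (\sum_a \sum_b complex.Re (conjc (G i a b) * D i a b)).
  rewrite mulr_sumr; apply: eq_bigr => i _; rewrite mulrCA; congr (_ * _).
  rewrite mulr_sumr; apply: eq_bigr => a _; rewrite mulr_sumr; apply: eq_bigr => b _ //.
move/eqP; rewrite mulf_eq0 => /orP[|/eqP //].
by rewrite oppr_eq0 pnatr_eq0.
Qed.

Lemma grad_W (hmin : local_min_J om H rho E A B Cm)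
  (A' : R -> 'M[R]_r) (B' : R -> 'M[R]_(r, ni)) (C' : R -> 'M[R]_(no, r))
  m m' (P : 'I_N -> 'M[C]_(no, m)) (Q : 'I_N -> 'M[C]_(m', ni)) (p : 'I_m) (q : 'I_m')
  (beta : 'I_N -> C) (d0 : R) :
  0 < d0 ->
  (forall t eps, `|t| < eps -> [/\ near_mx eps A (A' t), near_mx eps B (B' t) & near_mx eps Cm (C' t)]) ->
  (forall t, `|t| < d0 -> admissible om E (A' t) /\ forall i,
      tf E (A' t) (B' t) (C' t) (iw (om i)) =
        Hh i + (t%:C / (1 - t%:C * beta i)) *: (P i *m cmx (delta_mx p q) *m Q i)) ->
  complex.Re ((\sum_i (rho i)%:C *: (Q i *m ctrmx (G i) *m P i)) q p) = 0.
Proof.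
move=> d0p hn ht; have := grad_generic hmin d0p hn ht => <-.
rewrite summxE Re_sum; apply: eq_bigr => i _.
rewrite mxE Re_realM -ip_delta Re_sum; congr (_ * _).
by apply: eq_bigr => a _; rewrite Re_sum.
Qed.

Lemma W_zero m m' (P : 'I_N -> 'M[C]_(no, m)) (Q : 'I_N -> 'M[C]_(m', ni)) (pi : 'I_N -> 'I_N) :
  injective pi -> (forall i, rho (pi i) = rho i) -> (forall i, cconjmx (G i) = G (pi i)) ->
  (forall i, cconjmx (P i) = P (pi i)) -> (forall i, cconjmx (Q i) = Q (pi i)) ->
  (forall p q, complex.Re ((\sum_i (rho i)%:C *: (Q i *m ctrmx (G i) *m P i)) q p) = 0) ->
  \sum_i (rho i)%:C *: (Q i *m ctrmx (G i) *m P i) = 0.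
Proof.
move=> piinj hrho hG hP hQ hRe.
set W := \sum_i _.
have cW : cconjmx W = W.
  rewrite /W cconjmx_sum [RHS](reindex_inj piinj) /=; apply: eq_bigr => i _.
  by rewrite cconjmxZ conjc_real !cconjmxM cconj_ctrmx hG hP hQ hrho.
apply/matrixP => q p; have := hRe p q; rewrite mxE.
have : cconjmx W q p = W q p by rewrite cW.
rewrite /cconjmx mxE; case: (W q p) => a b /=; case=> e0 e1.
have bb : b + b = 0 by rewrite -{1}e0 addNr.
have b0 : b = 0 by lra.
by rewrite e1 b0.
Qed.


Lemma cmxDZ m n (X Y : 'M[R]_(m, n)) (t : R) : cmx (X + t *: Y) = cmx X + t%:C *: cmx Y.
Proof. by apply/matrixP => a b; rewrite /cmx !mxE rmorphD rmorphM. Qed.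

Lemma near_refl m n eps (X : 'M[R]_(m, n)) : 0 < eps -> near_mx eps X X.
Proof. by move=> ep a b; rewrite subrr normr0. Qed.

Lemma near_pert m n eps t (X : 'M[R]_(m, n)) p q : `|t| < eps -> near_mx eps X (X + t *: delta_mx p q).
Proof.
move=> ht a b; rewrite !mxE addrAC subrr add0r normrM; apply: le_lt_trans ht.
rewrite -{2}(mulr1 `|t|); apply: ler_wpM2l => //.
by case: (_ && _) => /=; rewrite ?normr1 ?normr0.
Qed.

Definition Ri i := invmx (iw (om i) *: cmx E - cmx A).

Lemma W1_re (hmin : local_min_J om H rho E A B Cm) p q :
  complex.Re ((\sum_i (rho i)%:C *: ((Ri i *m cmx B) *m ctrmx (G i) *m 1%:M)) q p) = 0.
Proof.
apply: (@grad_W hmin (fun _ => A) (fun _ => B) (fun t => Cm + t *: delta_mx p q) _ _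
   (fun _ => 1%:M) (fun i => Ri i *m cmx B) p q (fun _ => 0) 1) => //.
- move=> t eps ht; have ep : 0 < eps by apply: le_lt_trans ht.
  by split; [exact: near_refl|exact: near_refl|exact: near_pert].
- move=> t _; split; first exact: hmin.1.
  move=> i; rewrite /tf cmxDZ !mulmxDl -!scalemxAl /Hh /tf.
  by rewrite mulr0 subr0 divr1 mul1mx !mulmxA.
Qed.

Lemma W2_re (hmin : local_min_J om H rho E A B Cm) p q :
  complex.Re ((\sum_i (rho i)%:C *: (1%:M *m ctrmx (G i) *m (cmx Cm *m Ri i))) q p) = 0.
Proof.
apply: (@grad_W hmin (fun _ => A) (fun t => B + t *: delta_mx p q) (fun _ => Cm) _ _
   (fun i => cmx Cm *m Ri i) (fun _ => 1%:M) p q (fun _ => 0) 1) => //.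
- move=> t eps ht; have ep : 0 < eps by apply: le_lt_trans ht.
  by split; [exact: near_refl|exact: near_pert|exact: near_refl].
- move=> t _; split; first exact: hmin.1.
  move=> i; rewrite /tf cmxDZ !mulmxDr -!scalemxAr /Hh /tf.
  by rewrite mulr0 subr0 divr1 mulmx1.
Qed.


Lemma W3_re (hmin : local_min_J om H rho E A B Cm) (p q : 'I_r) :
  complex.Re ((\sum_i (rho i)%:C *: ((Ri i *m cmx B) *m ctrmx (G i) *m (cmx Cm *m Ri i))) q p) = 0.
Proof.
pose S := \sum_i `|complex.Re (Ri i q p)|.
have S0 : 0 <= S by apply: sumr_ge0 => i _.
have Sp : 0 < 2 * (S + 1) by apply: mulr_gt0 => //; lra.
apply: (@grad_W hmin (fun t => A + t *: delta_mx p q) (fun _ => B) (fun _ => Cm) _ _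
   (fun i => cmx Cm *m Ri i) (fun i => Ri i *m cmx B) p q (fun i => Ri i q p) (1 / (2 * (S + 1)))).
- by rewrite divr_gt0.
- move=> t eps ht; have ep : 0 < eps by apply: le_lt_trans ht.
  by split; [exact: near_pert|exact: near_refl|exact: near_refl].
- move=> t ht.
  have nz : forall i, 1 - t%:C * Ri i q p != 0.
    move=> i.
    have hb : `|t * complex.Re (Ri i q p)| <= 1/2.
      have hi : `|complex.Re (Ri i q p)| <= S.
        by rewrite /S (bigD1 i) //= lerDl sumr_ge0.
      move: ht; rewrite ltr_pdivlMr // normrM => ht.
      have := normr_ge0 t; have := normr_ge0 (complex.Re (Ri i q p)); nra.
    have := sqmod_1sub hb; apply: contraTneq => ->; rewrite /sqmod /=; lra.
  have eM : forall i, iw (om i) *: cmx E - cmx (A + t *: delta_mx p q)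
      = (iw (om i) *: cmx E - cmx A) - t%:C *: delta_mx p q.
    by move=> i; rewrite cmxDZ cmx_delta opprD addrA.
  have hS := fun i => sherman (hmin.1.2 i) (nz i).
  split.
    split; first exact: hmin.1.1.
    by move=> i; rewrite eM; have [u _] := mulmx1_unit (hS i).
  move=> i; rewrite /tf eM (inv_from_right (hS i)) /Hh /tf.
  rewrite mulmxDr mulmxDl -scalemxAr -scalemxAl cmx_delta !mulmxA.
  by rewrite /Ri.
Qed.

End Main.

Section Spec.
Variables (R : rcfType) (r : nat) (E A : 'M[R]_r) (T S : 'M[R[i]]_r) (lam : 'I_r -> R[i]).
Hypotheses (T_unit : T \in unitmx)
  (hSET : ctrmx S *m cmx E *m T = 1%:M)
  (hSAT : ctrmx S *m cmx A *m T = diag_mx (\row_j lam j)).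
Local Notation C := (R[i]).

Lemma S_unit' : ctrmx S \in unitmx.
Proof. by have [u _] := mulmx1_unit (etrans (mulmxA _ _ _) hSET). Qed.

Lemma spec_D (s : C) : ctrmx S *m (s *: cmx E - cmx A) *m T = s *: 1%:M - diag_mx (\row_j lam j).
Proof. by rewrite mulmxBr mulmxBl -scalemxAr -scalemxAl hSET hSAT. Qed.

Lemma spec_row (s : C) k : (s *: cmx E - cmx A) \in unitmx ->
  [/\ s - lam k != 0,
      (delta_mx 0 k : 'rV[C]_r) *m invmx T *m invmx (s *: cmx E - cmx A) = (s - lam k)^-1 *: ((delta_mx 0 k : 'rV[C]_r) *m ctrmx S) &
      invmx (s *: cmx E - cmx A) *m (invmx (ctrmx S) *m (delta_mx k 0 : 'cV[C]_r)) = (s - lam k)^-1 *: (T *m (delta_mx k 0 : 'cV[C]_r))].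
Proof.
move=> uM; set M := s *: cmx E - cmx A.
have uS := S_unit'.
have erow : (delta_mx 0 k : 'rV[C]_r) *m ctrmx S *m M = (s - lam k) *: ((delta_mx 0 k : 'rV[C]_r) *m invmx T).
  have -> : (delta_mx 0 k : 'rV[C]_r) *m ctrmx S *m M = (delta_mx 0 k : 'rV[C]_r) *m (ctrmx S *m M *m T) *m invmx T.
    by rewrite !mulmxA -[_ *m T *m invmx T]mulmxA (mulmxV T_unit) mulmx1.
  rewrite spec_D mulmxBr -scalemxAr mulmx1 delta_diag mxE -scalerBl.
  by rewrite scalemxAl.
have ecol : M *m T *m (delta_mx k 0 : 'cV[C]_r) = (s - lam k) *: (invmx (ctrmx S) *m (delta_mx k 0 : 'cV[C]_r)).
  have -> : M *m T *m (delta_mx k 0 : 'cV[C]_r) = invmx (ctrmx S) *m (ctrmx S *m M *m T) *m (delta_mx k 0 : 'cV[C]_r).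
    by rewrite !mulmxA (mulVmx uS) mul1mx.
  rewrite spec_D -mulmxA mulmxBl -scalemxAl mul1mx diag_delta mxE -scalerBl.
  by rewrite -scalemxAr.
have nz : s - lam k != 0.
  apply/eqP => e0; move: erow; rewrite e0 scale0r => /(congr1 (mulmx^~ (invmx M))).
  rewrite mul0mx -[_ *m M *m invmx M]mulmxA (mulmxV uM) mulmx1 => /(congr1 (mulmx^~ (invmx (ctrmx S)))).
  rewrite mul0mx -[_ *m ctrmx S *m invmx _]mulmxA (mulmxV uS) mulmx1 => /matrixP /(_ 0 k); rewrite !mxE !eqxx /=.
  by move/eqP; rewrite oner_eq0.
split => //.
  apply: (scalerI nz).
  by rewrite scalerA (mulfV nz) scale1r scalemxAl -erow -[_ *m M *m invmx M]mulmxA (mulmxV uM) mulmx1.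
apply: (scalerI nz).
by rewrite scalerA (mulfV nz) scale1r scalemxAr -ecol !mulmxA (mulVmx uM) mul1mx.
Qed.
End Spec.

Lemma ctrmx_delta (R : rcfType) m n (p : 'I_m) (q : 'I_n) :
  ctrmx (delta_mx p q : 'M[R[i]]_(m, n)) = delta_mx q p.
Proof. by apply/matrixP => a b; rewrite /ctrmx /cconjmx !mxE rmorph_nat andbC. Qed.

Lemma ctrmx_tr (R : rcfType) m n (X : 'M[R[i]]_(m, n)) : ctrmx X^T = cconjmx X.
Proof. by apply/matrixP => a b; rewrite /ctrmx /cconjmx !mxE. Qed.

Lemma numconjE (R : rcfType) (x : R[i]) : Num.conj x = conjc x.
Proof. reflexivity. Qed.

Lemma conjcM (R : rcfType) (x y : R[i]) : conjc (x * y) = conjc x * conjc y.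
Proof. exact: rmorphM. Qed.
Lemma conjcV (R : rcfType) (x : R[i]) : conjc (x^-1) = (conjc x)^-1.
Proof. exact: fmorphV. Qed.
Lemma conjcB (R : rcfType) (x y : R[i]) : conjc (x - y) = conjc x - conjc y.
Proof. exact: rmorphB. Qed.

Lemma ctrmx0 (R : rcfType) m n : ctrmx (0 : 'M[R[i]]_(m, n)) = 0.
Proof. by apply/matrixP => a b; rewrite /ctrmx /cconjmx !mxE; exact: (rmorph0 (@conjc R)). Qed.

Lemma conjcR (R : rcfType) (x : R) : conjc x%:C = x%:C.
Proof. exact: conjc_real. Qed.

Unset Implicit Arguments.

Theorem theorem4p1 (R : rcfType) (N ni no r : nat)
  (om : 'I_N -> R) (H : 'I_N -> 'M[R[i]]_(no, ni)) (rho : 'I_N -> R)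
  (* distinct sampling frequencies *)
  (om_inj : injective om)
  (* closure under conjugation, with equal weights on conjugate pairs *)
  (hconj : forall k, exists k' : 'I_N,
      [/\ om k' = - om k, H k' = cconjmx (H k) & rho k' = rho k])
  (rho_pos : forall i, 0 < rho i)
  (E A : 'M[R]_r) (B : 'M[R]_(r, ni)) (Cm : 'M[R]_(no, r))
  (T S : 'M[R[i]]_r) (lam : 'I_r -> R[i])
  (T_unit : T \in unitmx) (S_unit : S \in unitmx)
  (hSET : ctrmx S *m cmx E *m T = 1%:M)
  (hSAT : ctrmx S *m cmx A *m T = diag_mx (\row_j lam j))
  (lam_inj : injective lam)
  (hmin : local_min_J om H rho E A B Cm) :
  let c (k : 'I_r) : 'cV[R[i]]_no := cmx Cm *m T *m delta_mx k 0 in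
  let b (k : 'I_r) : 'cV[R[i]]_ni := (cmx B)^T *m S *m delta_mx k 0 in
  let Hh (i : 'I_N) := tf E A B Cm (iw (om i)) in
  let d (i : 'I_N) (k : 'I_r) : R[i] := - iw (om i) - (lam k)^* in
  forall k : 'I_r,
  [/\ \sum_(i < N) ((rho i)%:C / d i k) *: (H i *m b k)
        = \sum_(i < N) ((rho i)%:C / d i k) *: (Hh i *m b k),
      \sum_(i < N) ((rho i)%:C / d i k) *: (ctrmx (c k) *m H i)
        = \sum_(i < N) ((rho i)%:C / d i k) *: (ctrmx (c k) *m Hh i) &
      \sum_(i < N) ((rho i)%:C / d i k ^+ 2) *: (ctrmx (c k) *m H i *m b k)
        = \sum_(i < N) ((rho i)%:C / d i k ^+ 2) *: (ctrmx (c k) *m Hh i *m b k)].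
Proof.
move=> c b Hh0 d k.
pose pi (k0 : 'I_N) := odflt k0 [pick k' | om k' == - om k0].
have pi_om : forall k0, om (pi k0) = - om k0.
  move=> k0; rewrite /pi; case: pickP => [k' /eqP // | hn].
  by have [k' [e _ _]] := hconj k0; move: (hn k'); rewrite e eqxx.
have pi_prop : forall k0, H (pi k0) = cconjmx (H k0) /\ rho (pi k0) = rho k0.
  move=> k0; have [k' [e1 e2 e3]] := hconj k0.
  by have <- : k' = pi k0 by apply: om_inj; rewrite e1 pi_om.
have pi_inj : injective pi.
  by move=> x y e; apply: om_inj; apply: oppr_inj; rewrite -!pi_om e.
have cR : forall i, cconjmx (Ri om E A i) = Ri om E A (pi i).
  by move=> i; rewrite /Ri cconjmx_inv cconjmxB cconjmxZ !cconj_cmx conj_iw pi_om.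
have cHh : forall i, cconjmx (Hh om E A B Cm i) = Hh om E A B Cm (pi i).
  by move=> i; rewrite /Hh /tf !cconjmxM cconjmx_inv cconjmxB cconjmxZ !cconj_cmx conj_iw pi_om.
have cG : forall i, cconjmx (G om H E A B Cm i) = G om H E A B Cm (pi i).
  by move=> i; rewrite /G cconjmxB cHh (pi_prop i).1.
have prho : forall i, rho (pi i) = rho i by move=> i; exact: (pi_prop i).2.
have W1 := W_zero pi_inj prho cG (fun i => cconjmx1 _ _)
   (fun i => etrans (cconjmxM _ _) (congr2 mulmx (cR i) (cconj_cmx _))) (W1_re hmin).
have W2 := W_zero pi_inj prho cG
   (fun i => etrans (cconjmxM _ _) (congr2 mulmx (cconj_cmx _) (cR i))) (fun i => cconjmx1 _ _) (W2_re hmin).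
have W3 := W_zero pi_inj prho cG
   (fun i => etrans (cconjmxM _ _) (congr2 mulmx (cconj_cmx _) (cR i)))
   (fun i => etrans (cconjmxM _ _) (congr2 mulmx (cR i) (cconj_cmx _))) (W3_re hmin).
pose u := (delta_mx 0 k : 'rV[R[i]]_r) *m invmx T.
pose v := invmx (ctrmx S) *m (delta_mx k 0 : 'cV[R[i]]_r).
pose ci i := (iw (om i) - lam k)^-1.
have sp : forall i, [/\ iw (om i) - lam k != 0, u *m Ri om E A i = ci i *: ((delta_mx 0 k : 'rV[R[i]]_r) *m ctrmx S)
     & Ri om E A i *m v = ci i *: (T *m (delta_mx k 0 : 'cV[R[i]]_r))].
  by move=> i; have [h1 h2 h3] := spec_row T_unit hSET hSAT k (hmin.1.2 i).
have bstar : ctrmx (b k) = (delta_mx 0 k : 'rV[R[i]]_r) *m ctrmx S *m cmx B.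
  by rewrite /b !ctrmx_mul ctrmx_delta ctrmx_tr cconj_cmx mulmxA.
have cconj : forall i, conjc ((rho i)%:C * ci i) = (rho i)%:C / d i k.
  move=> i; rewrite conjcM conjc_real conjcV conjcB conj_iw iwN /d.
  by rewrite numconjE.
have e1 : \sum_i ((rho i)%:C / d i k) *: (G om H E A B Cm i *m b k) = 0.
  have := congr1 (fun X => ctrmx (u *m X)) W1; rewrite /= mulmx0 ctrmx0 => h; apply: (etrans _ h).
  rewrite mulmx_sumr ctrmx_sum; apply: eq_bigr => i _.
  have [_ hu _] := sp i.
  rewrite -scalemxAr ctrmxZ mulmx1 !mulmxA hu -!scalemxAl ctrmxZ ctrmx_mul -bstar ctrmxK.
  by rewrite scalerA -conjcM cconj (ctrmxK (b k)) /b !mulmxA.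
have e2 : \sum_i ((rho i)%:C / d i k) *: (ctrmx (c k) *m G om H E A B Cm i) = 0.
  have := congr1 (fun X => ctrmx (X *m v)) W2; rewrite /= mul0mx ctrmx0 => h; apply: (etrans _ h).
  rewrite mulmx_suml ctrmx_sum; apply: eq_bigr => i _.
  have [_ _ hv] := sp i.
  rewrite -scalemxAl ctrmxZ mul1mx -!mulmxA hv -!scalemxAr ctrmxZ scalerA -conjcM cconj.
  by rewrite !ctrmx_mul (ctrmxK (G om H E A B Cm i)) /c !mulmxA.
have cci : forall i, conjc (ci i) = (d i k)^-1.
  by move=> i; rewrite conjcV conjcB conj_iw iwN /d numconjE.
have e3 : \sum_i ((rho i)%:C / d i k ^+ 2) *: (ctrmx (c k) *m G om H E A B Cm i *m b k) = 0.
  have := congr1 (fun X => ctrmx (u *m X *m v)) W3; rewrite /= mulmx0 mul0mx ctrmx0 => h; apply: (etrans _ h).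
  rewrite mulmx_sumr mulmx_suml ctrmx_sum; apply: eq_bigr => i _.
  have [_ hu hv] := sp i.
  rewrite -scalemxAr -scalemxAl ctrmxZ.
  have -> : u *m (Ri om E A i *m cmx B *m ctrmx (G om H E A B Cm i) *m (cmx Cm *m Ri om E A i)) *m v
     = (u *m Ri om E A i) *m cmx B *m ctrmx (G om H E A B Cm i) *m cmx Cm *m (Ri om E A i *m v).
    by rewrite !mulmxA.
  rewrite hu hv -!scalemxAl -scalemxAr scalerA ctrmxZ scalerA conjcM !cci conjcR.
  have -> : (delta_mx 0 k : 'rV[R[i]]_r) *m ctrmx S *m cmx B *m ctrmx (G om H E A B Cm i) *m cmx Cm *m (T *m delta_mx k 0)
     = ctrmx (b k) *m ctrmx (G om H E A B Cm i) *m c k by rewrite bstar /c !mulmxA.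
  rewrite (ctrmx_mul (ctrmx (b k) *m ctrmx (G om H E A B Cm i)) (c k)) (ctrmx_mul (ctrmx (b k))) (ctrmxK (G om H E A B Cm i)) (ctrmxK (b k)) !mulmxA.
  by rewrite expr2 invfM.
split.
- apply/eqP; rewrite -subr_eq0 -sumrB; apply/eqP; rewrite -[RHS]e1.
  by apply: eq_bigr => i _; rewrite -scalerBr -mulmxBl.
- apply/eqP; rewrite -subr_eq0 -sumrB; apply/eqP; rewrite -[RHS]e2.
  by apply: eq_bigr => i _; rewrite -scalerBr -mulmxBr.
- apply/eqP; rewrite -subr_eq0 -sumrB; apply/eqP; rewrite -[RHS]e3.
  by apply: eq_bigr => i _; rewrite -scalerBr -mulmxBl -mulmxBr.
Qed.
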